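(* Let $n\ge1$, $1\le\ell\le n$, and let $\widetilde{\mathbf k}=(\widetilde k_{ji})_{1\le i\le j\le n+1}$ be a tuple of non-negative integers. Then, in $\mathsf{Ch}_n$, $$\mathfrak C_{\widetilde{\mathbf k}}(a_1,\dots,a_\ell,a_\ell,a_{\ell+1},\dots,a_n)=\mathfrak C_{\mathbf k}(a_1,\dots,a_n),$$ where $\mathbf k=(k_{ji})_{1\le i\le j\le n}$ is given by $$k_{ji}=\begin{cases}\widetilde k_{ji}& \text{if } j<\ell,\\ \widetilde k_{\ell i}+\widetilde k_{(\ell+1)i}&\text{if } j=\ell>i,\\ \widetilde k_{\ell\ell}+2\widetilde k_{(\ell+1)\ell}+\widetilde k_{(\ell+1)(\ell+1)}&\text{if } j=i=\ell,\\ \widetilde k_{(j+1)i}&\text{if } j>\ell>i,\\ \widetilde k_{(j+1)\ell}+\widetilde k_{(j+1)(\ell+1)}&\text{if } j>i=\ell,\\ \widetilde k_{(j+1)(i+1)}&\text{if } j,i>\ell.\end{cases}$$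
   Context: The Chinese monoid of rank $m$ is $\mathsf{Ch}_m=\langle a_1,\dots,a_m\rangle$ with relations $a_ja_ka_i=a_ka_ja_i=a_ka_ia_j$ for all $1\le i\le j\le k\le m$. For a tuple $\mathbf k=(k_{ji})_{1\le i\le j\le m}$ of non-negative integers and elements $x_1,\dots,x_m$ of a monoid, the canonical-form word is $\mathfrak C_{\mathbf k}(x_1,\dots,x_m)=b_1b_2\cdots b_m$ where $b_j=(x_jx_1)^{k_{j1}}(x_jx_2)^{k_{j2}}\cdots(x_jx_{j-1})^{k_{j(j-1)}}x_j^{k_{jj}}$ (so $b_1=x_1^{k_{11}}$). Every element of $\mathsf{Ch}_m$ equals $\mathfrak C_{\mathbf k}(a_1,\dots,a_m)$ for a unique such tuple $\mathbf k$ (the canonical form). In the left-hand side above, the word $\mathfrak C_{\widetilde{\mathbf k}}$ in $n+1$ variables is evaluated at the $n+1$ elements $a_1,\dots,a_\ell,a_\ell,a_{\ell+1},\dots,a_n$ of $\mathsf{Ch}_n$ (the generator $a_\ell$ repeated). *)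

(* Defs.v *)
From mathcomp Require Import all_boot.
Set Implicit Arguments. Unset Strict Implicit. Unset Printing Implicit Defensive.

(* Words over the alphabet of generators: the letter t stands for a_t
   (generators of Ch_n are the letters 1..n). *)
Definition word := seq nat.

Inductive chstep (n : nat) : word -> word -> Prop :=
| chstep1 (u v : word) (i j k : nat) :
    1 <= i -> i <= j -> j <= k -> k <= n ->
    chstep n (u ++ [:: j; k; i] ++ v) (u ++ [:: k; j; i] ++ v)
| chstep2 (u v : word) (i j k : nat) :
    1 <= i -> i <= j -> j <= k -> k <= n ->
    chstep n (u ++ [:: k; j; i] ++ v) (u ++ [:: k; i; j] ++ v).

Inductive chin_eq (n : nat) : word -> word -> Prop :=
| chin_refl w : chin_eq n w w
| chin_step w1 w2 : chstep n w1 w2 -> chin_eq n w1 w2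
| chin_sym w1 w2 : chin_eq n w1 w2 -> chin_eq n w2 w1
| chin_trans w1 w2 w3 : chin_eq n w1 w2 -> chin_eq n w2 w3 -> chin_eq n w1 w3.

Definition wpow (w : word) (e : nat) : word := flatten (nseq e w).

Definition cblock (k : nat -> nat -> nat) (x : nat -> word) (j : nat) : word :=
  flatten [seq wpow (x j ++ x i) (k j i) | i <- iota 1 j.-1] ++ wpow (x j) (k j j).

(* C_k(x_1,...,x_m) = b_1 b_2 ... b_m ; the tuple k is given as a function,
   only its values k j i with 1 <= i <= j <= m are used. *)
Definition cform (m : nat) (k : nat -> nat -> nat) (x : nat -> word) : word :=
  flatten [seq cblock k x j | j <- iota 1 m].

Definition kmerge (l : nat) (kt : nat -> nat -> nat) (j i : nat) : nat :=
  if j < l then kt j i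
  else if j == l then
    (if i < l then kt l i + kt l.+1 i
     else kt l l + 2 * kt l.+1 l + kt l.+1 l.+1)
  else
    (if i < l then kt j.+1 i
     else if i == l then kt j.+1 l + kt j.+1 l.+1
     else kt j.+1 i.+1).

(* The sequence of n+1 letters a_1,...,a_l,a_l,a_{l+1},...,a_n (indices 1..n+1). *)
Definition dupgen (l : nat) (t : nat) : word := [:: if t <= l then t else t.-1].

(* Main.v *)
Require Import Defs.
From mathcomp Require Import all_boot.
From mathcomp Require Import zify.

Section Aux.
Variable n : nat.
Notation ceq := (chin_eq n).

Lemma step_ctx p s w1 w2 : chstep n w1 w2 -> chstep n (p ++ w1 ++ s) (p ++ w2 ++ s).
Proof.
case=> u v i j k h1 h2 h3 h4.
  have -> : p ++ (u ++ [:: j; k; i] ++ v) ++ s = (p ++ u) ++ [:: j; k; i] ++ (v ++ s)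
    by rewrite !catA.
  have -> : p ++ (u ++ [:: k; j; i] ++ v) ++ s = (p ++ u) ++ [:: k; j; i] ++ (v ++ s)
    by rewrite !catA.
  exact: chstep1.
have -> : p ++ (u ++ [:: k; j; i] ++ v) ++ s = (p ++ u) ++ [:: k; j; i] ++ (v ++ s)
  by rewrite !catA.
have -> : p ++ (u ++ [:: k; i; j] ++ v) ++ s = (p ++ u) ++ [:: k; i; j] ++ (v ++ s)
  by rewrite !catA.
exact: chstep2.
Qed.

Lemma ceq_ctx p s w1 w2 : ceq w1 w2 -> ceq (p ++ w1 ++ s) (p ++ w2 ++ s).
Proof.
elim=> [w|a b H|a b _ IH|a b c _ IH1 _ IH2].
- exact: chin_refl.
- exact/chin_step/step_ctx.
- exact: chin_sym.
- exact: chin_trans IH1 IH2.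
Qed.

Lemma ceq_cat u u' v v' : ceq u u' -> ceq v v' -> ceq (u ++ v) (u' ++ v').
Proof.
move=> H1 H2; apply: (@chin_trans _ _ (u' ++ v)).
  by have := @ceq_ctx [::] v _ _ H1.
by have := @ceq_ctx u' [::] _ _ H2; rewrite !cats0.
Qed.

Definition comm u v := ceq (u ++ v) (v ++ u).

Lemma comm_sym u v : comm u v -> comm v u.
Proof. exact: chin_sym. Qed.

Lemma comm_nil w : comm [::] w.
Proof. rewrite /comm cats0; exact: chin_refl. Qed.

Lemma comm_catl u v w : comm u w -> comm v w -> comm (u ++ v) w.
Proof.
move=> H1 H2; rewrite /comm.
apply: (@chin_trans _ _ (u ++ w ++ v)).
  rewrite -catA; apply: ceq_cat => //; exact: chin_refl.
rewrite !catA; apply: ceq_cat => //; exact: chin_refl.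
Qed.

Lemma wpowS w p : wpow w p.+1 = w ++ wpow w p.
Proof. by []. Qed.

Lemma wpowD w a b : wpow w (a + b) = wpow w a ++ wpow w b.
Proof. by rewrite /wpow nseqD flatten_cat. Qed.

Lemma comm_powl u w p : comm u w -> comm (wpow u p) w.
Proof.
move=> H; elim: p => [|p IH]; first exact: comm_nil.
rewrite wpowS; exact: comm_catl.
Qed.

Lemma comm_pow u w p q : comm u w -> comm (wpow u p) (wpow w q).
Proof. move=> H; by apply/comm_powl/comm_sym/comm_powl/comm_sym. Qed.

Lemma comm_flat (T : eqType) (f : T -> word) s w :
  (forall i, i \in s -> comm (f i) w) -> comm (flatten [seq f i | i <- s]) w.
Proof.
elim: s => [|a s IH] H /=; first exact: comm_nil.
apply: comm_catl; first by apply: H; rewrite mem_head.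
by apply: IH => i Hi; apply: H; rewrite inE Hi orbT.
Qed.

End Aux.

Lemma C1 n l i : 1 <= i -> i <= l -> l <= n -> comm n [:: l] [:: l; i].
Proof.
move=> h1 h2 h3; apply: chin_step.
exact: (@chstep2 n [::] [::] i l l h1 h2 (leqnn l) h3).
Qed.

Lemma C2a n l i i' : 1 <= i -> i <= i' -> i' <= l -> l <= n -> comm n [:: l; i'] [:: l; i].
Proof.
move=> h1 h2 h3 h4; rewrite /comm /=.
apply: (@chin_trans _ _ [:: l; l; i'; i]).
  apply: chin_step; exact: (@chstep1 n [:: l] [::] i i' l h1 h2 h3 h4).
apply: (@chin_trans _ _ [:: l; l; i; i']).
  apply: chin_step; exact: (@chstep2 n [:: l] [::] i i' l h1 h2 h3 h4).
apply: chin_step.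
exact: (@chstep2 n [::] [:: i'] i l l h1 (leq_trans h2 h3) (leqnn l) h4).
Qed.

Lemma C2 n l i i' : 1 <= i -> 1 <= i' -> i <= l -> i' <= l -> l <= n ->
  comm n [:: l; i'] [:: l; i].
Proof.
move=> h1 h1' h2 h2' h3; case: (leqP i i') => h.
  exact: C2a.
apply: comm_sym; apply: C2a => //; exact: ltnW.
Qed.

Definition F l (p : nat -> nat) (s : seq nat) := flatten [seq wpow [:: l; i] (p i) | i <- s].

Lemma FF n l p q s : l <= n -> (forall i, i \in s -> 1 <= i <= l) ->
  chin_eq n (F l p s ++ F l q s) (F l (fun i => p i + q i) s).
Proof.
move=> hl; elim: s => [|a s IH] H; first exact: chin_refl.
have Ha := H a (mem_head a s); case/andP: Ha => a1 a2.
rewrite /F /= -/(F l p s) -/(F l q s) -/(F l _ s) wpowD -!catA.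
apply: ceq_cat; first exact: chin_refl.
rewrite !catA; apply: (@chin_trans _ _ ((wpow [:: l; a] (q a) ++ F l p s) ++ F l q s)).
  apply: ceq_cat; last exact: chin_refl.
  apply: comm_flat => i Hi; apply: comm_pow.
  have /andP[i1 i2] : 1 <= i <= l by apply: H; rewrite inE Hi orbT.
  exact: C2.
rewrite -!catA; apply: ceq_cat; first exact: chin_refl.
by apply: IH => i Hi; apply: H; rewrite inE Hi orbT.
Qed.

Lemma wpow2 x b : wpow [:: x; x] b = wpow [:: x] (b + b).
Proof.
elim: b => [|b IH] //; rewrite addSn addnS !wpowS IH //.
Qed.

Lemma partB n l kt : 1 <= l -> l <= n ->
  chin_eq n (cblock kt (dupgen l) l ++ cblock kt (dupgen l) l.+1)
            (cblock (kmerge l kt) (fun t => [:: t]) l).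
Proof.
move=> l1 ln.
have eS : iota 1 l = iota 1 l.-1 ++ [:: l].
  by rewrite -{1}(prednK l1) -[l.-1.+1]addn1 iotaD add1n prednK.
rewrite /cblock /= eS map_cat flatten_cat /=.
have hs : forall i, i \in iota 1 l.-1 -> 1 <= i < l.
  by move=> i; rewrite mem_iota; lia.
set s := iota 1 l.-1 in hs *.
have ex : forall t, t <= l -> dupgen l t = [:: t] by move=> t ht; rewrite /dupgen ht.
have exl : dupgen l l.+1 = [:: l] by rewrite /dupgen ltnn.
rewrite exl ex //.
rewrite leqnn ltnn cats0.
have e1 : forall p, flatten [seq wpow (l :: dupgen l i) (p i) | i <- s] = F l p s.
  move=> p; rewrite /F; congr flatten; apply/eq_in_map => i /hs /andP[_ /ltnW hi].
  by rewrite ex.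
have e2 : flatten [seq wpow [:: l; i] (kmerge l kt l i) | i <- s] = F l (fun i => kt l i + kt l.+1 i) s.
  rewrite /F; congr flatten; apply/eq_in_map => i /hs /andP[_ hi].
  by rewrite /kmerge ltnn eqxx hi.
have e3 : kmerge l kt l l = kt l l + 2 * kt l.+1 l + kt l.+1 l.+1.
  by rewrite /kmerge ltnn eqxx.
rewrite !e1 e2 e3 mul2n -addnn wpow2.
have FS : forall i, i \in s -> 1 <= i <= l by move=> i /hs; lia.
set A := wpow [:: l] (kt l l).
set B := wpow [:: l] (kt l.+1 l + kt l.+1 l).
set C := wpow [:: l] (kt l.+1 l.+1).
apply: (@chin_trans _ _ ((F l (kt l) s ++ F l (kt l.+1) s) ++ (A ++ B ++ C))).
  rewrite -!catA; apply: ceq_cat; first exact: chin_refl.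
  rewrite !catA; apply: ceq_cat; last exact: chin_refl.
  apply: ceq_cat; last exact: chin_refl.
  apply: comm_sym; apply: comm_flat => i Hi; apply: comm_pow.
  have /andP[i1 i2] := FS i Hi; apply: comm_sym; exact: C1.
apply: ceq_cat; first exact: FF.
by rewrite /A /B /C -!wpowD addnA; apply: chin_refl.
Qed.

Lemma iota_succ m k : iota m.+1 k = map S (iota m k).
Proof. by elim: k m => //= k IH m; rewrite IH. Qed.

Lemma partA l kt : {in iota 1 l.-1, cblock kt (dupgen l) =1 cblock (kmerge l kt) (fun t => [:: t])}.
Proof.
move=> j; rewrite mem_iota => /andP[j1 jl].
have jl' : j < l by lia.
rewrite /cblock /dupgen (ltnW jl') /kmerge jl'; congr (_ ++ _).
congr flatten; apply/eq_in_map => i; rewrite mem_iota => /andP[_ hi].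
have -> : i <= l by lia.
by [].
Qed.

Lemma partC l kt m : 1 <= l -> {in iota l.+1 m,
   (fun j => cblock kt (dupgen l) j.+1) =1 cblock (kmerge l kt) (fun t => [:: t])}.
Proof.
move=> l1 j; rewrite mem_iota => /andP[jl _].
have e1 : iota 1 j = iota 1 l.-1 ++ [:: l, l.+1 & iota l.+2 (j - l.+1)].
  rewrite -{1}(_ : l.-1 + (j - l.+1).+2 = j) ?iotaD; last by lia.
  by rewrite add1n prednK.
have e2 : iota 1 j.-1 = iota 1 l.-1 ++ l :: iota l.+1 (j - l.+1).
  rewrite -{1}(_ : l.-1 + (j - l.+1).+1 = j.-1) ?iotaD; last by lia.
  by rewrite add1n prednK.
rewrite /cblock /= e1 e2 !map_cat !flatten_cat /= (iota_succ l.+1) -map_comp.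
have nj : (j < l) = false by lia.
have nj' : (j == l) = false by lia.
have dj : dupgen l j.+1 = [:: j] by rewrite /dupgen; have -> : (j < l) = false by lia.
rewrite dj /dupgen nj leqnn ltnn.
have -> : kmerge l kt j j = kt j.+1 j.+1 by rewrite /kmerge nj nj'.
have -> : kmerge l kt j l = kt j.+1 l + kt j.+1 l.+1 by rewrite /kmerge nj nj' ltnn eqxx.
rewrite wpowD -!catA; congr (_ ++ _).
  congr flatten; apply/eq_in_map => i; rewrite mem_iota => /andP[_ hi].
  have -> : i <= l by lia.
  by rewrite /kmerge nj nj'; have -> : i < l by lia.
congr (_ ++ _ ++ _ ++ _).
congr flatten; apply/eq_in_map => i; rewrite mem_iota => /andP[hi _] /=.
have -> : (i.+1 <= l) = false by lia.
have h1 : (i < l) = false by lia.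
have h2 : (i == l) = false by lia.
by rewrite /kmerge nj nj' h1 h2.
Qed.

Theorem lemma1p4 (n l : nat) (kt : nat -> nat -> nat) :
  1 <= n -> 1 <= l -> l <= n ->
  chin_eq n (cform n.+1 kt (dupgen l)) (cform n (kmerge l kt) (fun t => [:: t])).
Proof.
move=> n1 l1 ln.
have e1 : iota 1 n.+1 = iota 1 l.-1 ++ [:: l, l.+1 & iota l.+2 (n - l)].
  rewrite -{1}(_ : l.-1 + (n - l).+2 = n.+1) ?iotaD; last by lia.
  by rewrite add1n prednK.
have e2 : iota 1 n = iota 1 l.-1 ++ l :: iota l.+1 (n - l).
  rewrite -{1}(_ : l.-1 + (n - l).+1 = n) ?iotaD; last by lia.
  by rewrite add1n prednK.
have eA : map (cblock kt (dupgen l)) (iota 1 l.-1)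
   = map (cblock (kmerge l kt) (fun t => [:: t])) (iota 1 l.-1).
  by apply/eq_in_map; exact: partA.
have eC : map (cblock kt (dupgen l)) (iota l.+2 (n - l))
   = map (cblock (kmerge l kt) (fun t => [:: t])) (iota l.+1 (n - l)).
  by rewrite iota_succ -map_comp; apply/eq_in_map; exact: partC.
rewrite /cform e1 e2 !map_cat !flatten_cat eA /= eC.
apply: ceq_cat; first exact: chin_refl.
rewrite catA; apply: ceq_cat; last exact: chin_refl.
exact: partB.
Qed.
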